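(* Let $\mathbf{u}=(u_1,u_2)\in\mathbb{R}[x_1,x_2]_d^2$ and $p\in\Sigma[x_1,x_2]_{2d}$, and suppose $\nabla f_p(\mathbf{u})=0$ and $\nabla^2 f_p(\mathbf{u})\succeq0$. Let $g,h,u_1',u_2'$ be real binary forms with $(u_1,u_2)=(u_1'gh,u_2'gh)$, $\gcd(u_1,u_2)=gh$, $\gcd(u_1',u_2')=1$, $\gcd(u_1'^2+u_2'^2,g)=1$, and every (possibly complex) root of $h$ a root of $u_1'^2+u_2'^2$. Let $k=\deg(h)$ and let $\mathbf{w}=(u_1'gx_1^k,\,u_2'gx_1^k)\in\mathbb{R}[x_1,x_2]_d^2$. If $$p\in\operatorname{im}(\mathcal{A}_{\mathbf{w}})+\operatorname{cone}\big(\sigma(\ker(\mathcal{A}_{\mathbf{u}}))\big),$$ then $f_p(\mathbf{u})=0$.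
   Context: $\mathbb{R}[x_1,x_2]_n$ denotes the space of real binary forms of degree $n$, and $\Sigma[x_1,x_2]_{2d}$ the cone of sums of squares of binary forms of degree $d$. For $\mathbf{a}=(a_1,a_2)\in\mathbb{R}[x_1,x_2]_d^2$, $\mathcal{A}_{\mathbf{a}}:\mathbb{R}[x_1,x_2]_d^2\to\mathbb{R}[x_1,x_2]_{2d}$ is $(v_1,v_2)\mapsto a_1v_1+a_2v_2$; $\sigma(v_1,v_2)=v_1^2+v_2^2$; $\operatorname{cone}(S)$ is the set of nonnegative combinations. A root of a binary form is a nonzero complex zero up to scaling; gcd is the common divisor of highest degree, coprime means gcd constant. Fix any inner product $\langle\cdot,\cdot\rangle$ on $\mathbb{R}[x_1,x_2]_{2d}$ with norm $\|\cdot\|$ and let $f_p(\mathbf{u})=\|\sigma(\mathbf{u})-p\|^2$. $\nabla f_p(\mathbf{u})=0$ means $\langle\mathcal{A}_{\mathbf{u}}(\mathbf{v}),\sigma(\mathbf{u})-p\rangle=0$ for all $\mathbf{v}\in\mathbb{R}[x_1,x_2]_d^2$, and $\nabla^2 f_p(\mathbf{u})\succeq0$ means $\langle\sigma(\mathbf{v}),\sigma(\mathbf{u})-p\rangle+2\|\mathcal{A}_{\mathbf{u}}(\mathbf{v})\|^2\ge0$ for all $\mathbf{v}\in\mathbb{R}[x_1,x_2]_d^2$. *)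

(* Defs.v *)
From mathcomp Require Import all_boot all_algebra.
From mathcomp Require Import reals.
From mathcomp Require Import complex.
From mathcomp Require Import mpoly.
Import GRing.Theory Num.Theory.
Set Implicit Arguments.
Unset Strict Implicit.
Unset Printing Implicit Defensive.
Local Open Scope ring_scope.

Section BinaryForms.
Variable R : realType.
Local Notation P := {mpoly R[2]}.

Definition form (n : nat) (f : P) : Prop := f \is n.-homog.

Definition is_form (f : P) : Prop := exists n, form n f.

Definition deg_form (f : P) : nat := (msize f).-1.

Definition pdvd (a b : P) : Prop := exists c : P, b = a * c.

(* gcd(a,b) = c : c is a common divisor divisible by every common divisor
   (gcd is defined up to a nonzero scalar) *)
Definition is_gcd (a b c : P) : Prop :=
  pdvd c a /\ pdvd c b /\ (forall e : P, pdvd e a -> pdvd e b -> pdvd e c).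

Definition pcoprime (a b : P) : Prop :=
  forall e : P, pdvd e a -> pdvd e b -> (msize e <= 1)%N.

Definition evalC (f : P) (z : 'I_2 -> R[i]) : R[i] :=
  (map_mpoly (real_complex R) f).@[z].

(* root of a binary form: nonzero complex zero (up to scaling) *)
Definition is_root (f : P) (z : 'I_2 -> R[i]) : Prop :=
  (exists i, z i != 0) /\ evalC f z = 0.

Definition sigma (v : P * P) : P := v.1 ^+ 2 + v.2 ^+ 2.

Definition Aop (a v : P * P) : P := a.1 * v.1 + a.2 * v.2.

Definition form2 (d : nat) (v : P * P) : Prop := form d v.1 /\ form d v.2.

Definition sos (d : nat) (p : P) : Prop :=
  exists s : seq P, (forall q, q \in s -> form d q) /\ p = \sum_(q <- s) q ^+ 2.

Definition inner_product (n : nat) (ip : P -> P -> R) : Prop :=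
  (forall (a : R) (x y z : P), form n x -> form n y -> form n z ->
      ip (a *: x + y) z = a * ip x z + ip y z) /\
  (forall x y : P, form n x -> form n y -> ip x y = ip y x) /\
  (forall x : P, form n x -> x != 0 -> 0 < ip x x).

Definition fp (ip : P -> P -> R) (p : P) (u : P * P) : R :=
  ip (sigma u - p) (sigma u - p).

(* grad f_p(u) = 0 *)
Definition grad_zero (d : nat) (ip : P -> P -> R) (p : P) (u : P * P) : Prop :=
  forall v : P * P, form2 d v -> ip (Aop u v) (sigma u - p) = 0.

(* Hess f_p(u) is PSD *)
Definition hess_psd (d : nat) (ip : P -> P -> R) (p : P) (u : P * P) : Prop :=
  forall v : P * P, form2 d v ->
    0 <= ip (sigma v) (sigma u - p) + 2 * ip (Aop u v) (Aop u v).

Definition in_im_plus_cone (d : nat) (w u : P * P) (p : P) : Prop :=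
  exists (v : P * P) (s : seq (R * (P * P))),
    form2 d v /\
    (forall c, c \in s -> 0 <= c.1 /\ form2 d c.2 /\ Aop u c.2 = 0) /\
    p = Aop w v + \sum_(c <- s) c.1 *: sigma c.2.

End BinaryForms.

(* Main.v *)
Require Import Defs.
From mathcomp Require Import all_boot all_order all_algebra.
From mathcomp Require Import reals.
From mathcomp Require Import complex.
From mathcomp Require Import mpoly.
From mathcomp Require Import zify ring lra.
Import Order.TTheory GRing.Theory Num.Theory.
Local Open Scope ring_scope.
Local Notation form := Defs.form.
Set Implicit Arguments.
Unset Strict Implicit.
Unset Printing Implicit Defensive.

Section Phi.
Variable R : realType.
Local Notation P := {mpoly R[2]}.

Definition hv : 'I_2 -> {poly R} := fun i => if i == ord0 then 1 else 'X.
Definition phi (f : P) : {poly R} := mmap (@polyC R) hv f.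

Lemma phiD f g : phi (f + g) = phi f + phi g.
Proof. exact: mmapD. Qed.
Lemma phiM f g : phi (f * g) = phi f * phi g.
Proof. by rewrite /phi rmorphM. Qed.
Lemma phiN f : phi (- f) = - phi f.
Proof. exact: mmapN. Qed.
Lemma phiB f g : phi (f - g) = phi f - phi g.
Proof. exact: mmapB. Qed.
Lemma phi0 : phi 0 = 0.
Proof. exact: mmap0. Qed.
Lemma phiZ c f : phi (c *: f) = c *: phi f.
Proof. by rewrite /phi mmapZ mul_polyC. Qed.
Lemma phiC c : phi c%:MP = c%:P.
Proof. by rewrite /phi mmapC. Qed.
Lemma phiX m : phi 'X_[m] = 'X^(m ord_max).
Proof.
rewrite /phi mmapX /mmap1 big_ord_recl big_ord1 /hv /= expr1n mul1r.
by congr ('X^(m _)); apply: val_inj.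
Qed.
Lemma phiXn f n : phi (f ^+ n) = phi f ^+ n.
Proof. by rewrite /phi rmorphXn. Qed.


Definition mk (a b : nat) : 'X_{1..2} :=
  [multinom (if i == ord0 then a else b) | i < 2].

Lemma mk0 a b : mk a b ord0 = a.
Proof. by rewrite mnmE. Qed.
Lemma mkmax a b : mk a b ord_max = b.
Proof. by rewrite mnmE. Qed.
Lemma mdeg_mk a b : mdeg (mk a b) = (a + b)%N.
Proof. by rewrite mdegE big_ord_recl big_ord1 !mnmE. Qed.

Lemma ord2_cases (i : 'I_2) : i = ord0 \/ i = ord_max.
Proof. by case: i => -[|[|]] //= H; [left|right]; apply: val_inj. Qed.

Lemma mk_eta (m : 'X_{1..2}) : m = mk (m ord0) (m ord_max).
Proof.
apply/mnmP => i; case: (ord2_cases i) => ->; by rewrite ?mk0 ?mkmax.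
Qed.

Lemma mdeg2 (m : 'X_{1..2}) : mdeg m = (m ord0 + m ord_max)%N.
Proof. by rewrite {1}(mk_eta m) mdeg_mk. Qed.

Definition Hn (n : nat) (Q : {poly R}) : P :=
  \sum_(j < n.+1) Q`_j *: 'X_[mk (n - j) j].

Lemma Hn_form n Q : form n (Hn n Q).
Proof.
rewrite /form /Hn; apply: rpred_sum => j _; apply: rpredZ.
apply/dhomogP => m; rewrite msuppX inE => /eqP ->.
by rewrite /= mdeg_mk subnK // -ltnS.
Qed.

Lemma phi_Hn n (Q : {poly R}) : (size Q <= n.+1)%N -> phi (Hn n Q) = Q.
Proof.
move=> hQ; rewrite /Hn (big_morph phi phiD phi0).
under eq_bigr => j _ do rewrite phiZ phiX mkmax.
rewrite -poly_def; apply/polyP => j; rewrite coef_poly.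
case: ltnP => // hj; by rewrite nth_default // (leq_trans hQ hj).
Qed.

Lemma HnD n Q1 Q2 : Hn n (Q1 + Q2) = Hn n Q1 + Hn n Q2.
Proof.
by rewrite /Hn -big_split /=; apply: eq_bigr => j _; rewrite coefD scalerDl.
Qed.
Lemma Hn0 n : Hn n 0 = 0.
Proof. by rewrite /Hn big1 // => j _; rewrite coef0 scale0r. Qed.
Lemma HnZ n c Q : Hn n (c *: Q) = c *: Hn n Q.
Proof.
by rewrite /Hn scaler_sumr; apply: eq_bigr => j _; rewrite coefZ scalerA.
Qed.

Lemma HnXn n k : (k <= n)%N -> Hn n 'X^k = 'X_[mk (n - k) k].
Proof.
move=> hk; rewrite /Hn (bigD1 (Ordinal (n:=n.+1) (m:=k) hk)) //= big1.
  by rewrite coefXn eqxx scale1r addr0.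
move=> j hj; rewrite coefXn; case: eqP => [e|]; last by rewrite scale0r.
by exfalso; move/eqP: hj; apply; apply: val_inj.
Qed.

Lemma phi_expand (f : P) :
  phi f = \sum_(m <- msupp f) f@_m *: 'X^(m ord_max).
Proof.
rewrite {1}(mpolyE f) (big_morph phi phiD phi0).
by apply: eq_bigr => m _; rewrite phiZ phiX.
Qed.

Lemma Hn_phi n f : form n f -> Hn n (phi f) = f.
Proof.
move=> /dhomogP hf; rewrite phi_expand (big_morph (Hn n) (@HnD n) (Hn0 n)).
apply/esym; rewrite {1}(mpolyE f) !big_seq; apply: eq_bigr => m hm.
have hd : mdeg m = n := hf m hm.
rewrite HnZ HnXn; last by rewrite -hd mdeg2 leq_addl.
congr (_ *: 'X_[_]); rewrite {1}(mk_eta m); congr mk.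
by rewrite -hd mdeg2 addnK.
Qed.

Lemma form_inj n f g : form n f -> form n g -> phi f = phi g -> f = g.
Proof. by move=> hf hg e; rewrite -(Hn_phi hf) -(Hn_phi hg) e. Qed.

Lemma size_phi n f : form n f -> (size (phi f) <= n.+1)%N.
Proof.
move=> /dhomogP hf; rewrite phi_expand big_seq.
apply: (big_ind (fun Q : {poly R} => size Q <= n.+1)%N).
- by rewrite size_poly0.
- by move=> x y hx hy; rewrite (leq_trans (size_polyD _ _)) // geq_max hx hy.
move=> m hm; rewrite (leq_trans (size_scale_leq _ _)) // size_polyXn ltnS.
have hd : mdeg m = n := hf m hm.
by rewrite -hd mdeg2 leq_addl.
Qed.

Lemma form_exists n (Q : {poly R}) : (size Q <= n.+1)%N -> exists f, form n f /\ phi f = Q.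
Proof. by move=> hQ; exists (Hn n Q); split; [apply: Hn_form|apply: phi_Hn]. Qed.

Lemma bez_uni (A B C : {poly R}) (m d : nat) :
  coprimep A B -> size A = m.+1 -> (size B <= m.+1)%N -> (m <= d)%N ->
  (size C <= (d + m).+1)%N ->
  exists Y Z : {poly R}, (size Y <= d.+1)%N /\ (size Z <= d.+1)%N /\ C = A * Y + B * Z.
Proof.
move=> /Bezout_eq1_coprimepP [[u v] /= huv] hA hB hmd hC.
have A0 : A != 0 by rewrite -size_poly_gt0 hA.
have [Y [Z [hZ eq]]] : exists Y Z : {poly R}, (size Z <= m)%N /\ C = A * Y + B * Z.
  set Z := (C * v) %% A.
  set Y := C * u + B * ((C * v) %/ A).
  exists Y, Z; split; first by rewrite -ltnS -hA ltn_modp.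
  rewrite /Y /Z; set q := (C * v) %/ A; set r := (C * v) %% A.
  have e : C * v = q * A + r := divp_eq _ _.
  apply/eqP; rewrite -subr_eq0; apply/eqP.
  transitivity (C * (1 - (u*A + v*B)) + B * (C * v - (q * A + r))); first ring.
  by rewrite huv e !subrr !mulr0 addr0.
exists Y, Z; split; last by split; [rewrite (leq_trans hZ) // (leq_trans hmd) | exact: eq].
have [->|Y0] := eqVneq Y 0; first by rewrite size_poly0.
have h1 : size (A * Y) = (m.+1 + size Y).-1 by rewrite size_mul // hA.
have h2 : A * Y = C - B * Z by rewrite eq addrK.
have h3 := size_polyMleq B Z.
have h4 := size_polyD C (- (B * Z)); rewrite size_polyN in h4.
rewrite -h2 h1 in h4.
have h5 : (0 < size Y)%N by rewrite size_poly_gt0.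
rewrite -!subn1 in h3 h4.
move: h4 h3 hZ hB hC hmd h5; move: (size (B*Z)) (size B) (size Z) (size C) (size Y) => a b c e f; clear; lia.
Qed.


Implicit Types (f g a b c e x y : P).

Lemma form0 n : form n (0 : P).
Proof. exact: dhomog0. Qed.
Lemma formD n f g : form n f -> form n g -> form n (f + g).
Proof. exact: dhomogD. Qed.
Lemma formN n f : form n f -> form n (- f).
Proof. by move=> h; rewrite /form dhomogN. Qed.
Lemma formB n f g : form n f -> form n g -> form n (f - g).
Proof. by move=> hf hg; apply: formD => //; apply: formN. Qed.
Lemma formZ n (c : R) f : form n f -> form n (c *: f).
Proof. exact: dhomogZ. Qed.
Lemma formM i j f g : form i f -> form j g -> form (i + j) (f * g).
Proof. exact: dhomogM. Qed.
Lemma form_eq i j f : form i f -> i = j -> form j f.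
Proof. by move=> h <-. Qed.
Lemma formX0 : form 1 ('X_0 : P).
Proof. by rewrite /form dhomogX /= mdeg1. Qed.
Lemma formXn k : form k ('X_0 ^+ k : P).
Proof.
elim: k => [|k IH]; first by rewrite expr0; apply: dhomog1.
by rewrite exprS; apply: (form_eq (formM formX0 IH)).
Qed.
Lemma phiX0 : phi ('X_0 : P) = 1.
Proof. by rewrite phiX mnm1E. Qed.
Lemma msizeX0 : msize ('X_0 : P) = 2%N.
Proof. by rewrite msizeX mdeg1. Qed.

Lemma form_uniq i j f : form i f -> form j f -> f != 0 -> i = j.
Proof. by move=> hi hj f0; apply: (dhomog_uniq f0 hi hj). Qed.

Lemma form_msize n f : form n f -> f != 0 -> msize f = n.+1.
Proof.
move=> hn f0; have h := dhomog_msize hn.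
rewrite (form_uniq hn h f0) prednK // lt0n msize_poly_eq0 //.
Qed.

Lemma pdvd0 (e : P) : pdvd e 0.
Proof. by exists 0; rewrite mulr0. Qed.

Lemma pdvd_of_phi n (a : P) (D : {poly R}) : form n a -> D %| phi a -> D != 0 ->
  exists e, form (size D).-1 e /\ phi e = D /\ pdvd e a.
Proof.
move=> ha hD D0.
have [e [he pe]] := @form_exists (size D).-1 D (leqSpred _).
exists e; split => //; split => //.
have [pa0|a0] := eqVneq (phi a) 0.
  by rewrite (form_inj ha (form0 n) (etrans pa0 (esym phi0))); apply: pdvd0.
case/dvdpP: hD => Q hQ.
have Q0 : Q != 0 by apply: contraNneq a0 => Q0; rewrite hQ Q0 mul0r.
have hs : size (phi a) = (size Q + size D).-1 by rewrite hQ size_mul.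
have hsa := size_phi ha.
have hQp : (0 < size Q)%N by rewrite size_poly_gt0.
have hDp : (0 < size D)%N by rewrite size_poly_gt0.
have hb : (size Q <= (n - (size D).-1).+1)%N.
  move: hs hsa hQp hDp; rewrite -!subn1; move: (size Q) (size D) (size (phi a)) => x y z.
  clear; lia.
have [q [hq pq]] := @form_exists (n - (size D).-1) Q hb.
exists q; apply: (form_inj ha).
  apply: (form_eq (formM he hq)).
  move: hs hsa hQp hDp; rewrite -!subn1; move: (size Q) (size D) (size (phi a)) => x y z.
  clear; lia.
by rewrite phiM pe pq hQ mulrC.
Qed.


Lemma X0_dvd n a : form n a -> (size (phi a) <= n)%N -> pdvd 'X_0 a.
Proof.
case: n => [|n] ha hs.
  have pa0 : phi a = 0 by apply/eqP; rewrite -size_poly_eq0 -leqn0.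
  by rewrite (form_inj ha (form0 0) (etrans pa0 (esym phi0))); apply: pdvd0.
have [a' [ha' pa']] := @form_exists n (phi a) hs.
exists a'; apply: (form_inj ha (form_eq (formM formX0 ha') (add1n _))).
by rewrite phiM phiX0 mul1r pa'.
Qed.

Lemma not_pcoprime_X0 a b : pdvd 'X_0 a -> pdvd 'X_0 b -> ~ pcoprime a b.
Proof. by move=> ha hb hc; have := hc _ ha hb; rewrite msizeX0. Qed.

Lemma coprime_phi m a b : pcoprime a b -> form m a -> form m b ->
  coprimep (phi a) (phi b) /\ (size (phi a) = m.+1 \/ size (phi b) = m.+1).
Proof.
move=> hc ha hb; split.
  apply/coprimepP => D hDa hDb.
  have [D0|D0] := eqVneq D 0.
    rewrite D0 !dvd0p in hDa hDb.
    have a0 : a = 0 by apply: (form_inj ha (form0 m)); rewrite (eqP hDa) phi0.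
    have b0 : b = 0 by apply: (form_inj hb (form0 m)); rewrite (eqP hDb) phi0.
    by exfalso; apply: (not_pcoprime_X0 _ _ hc); rewrite ?a0 ?b0; apply: pdvd0.
  have [e [he [pe hea]]] := pdvd_of_phi ha hDa D0.
  have [e' [he' [pe' heb]]] := pdvd_of_phi hb hDb D0.
  have ee : e' = e by apply: (form_inj he' he); rewrite pe pe'.
  rewrite ee in heb.
  have hm := hc e hea heb.
  have [/eqP s1|s1] := eqVneq (size D) 1%N; first by rewrite -size_poly_eq1 s1.
  exfalso; have e0 : e != 0 by apply: contraNneq D0 => e0; rewrite -pe e0 phi0.
  move: hm; rewrite (form_msize he e0) prednK ?size_poly_gt0 //.
  have : (size D != 0)%N by rewrite size_poly_eq0.
  by move: s1; case: (size D) => [|[|]].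
have [sa'|sa'] := eqVneq (size (phi a)) m.+1; first by left.
have [sb'|sb'] := eqVneq (size (phi b)) m.+1; first by right.
have sa := size_phi ha; have sb := size_phi hb.
exfalso; apply: (not_pcoprime_X0 _ _ hc).
  by apply: (X0_dvd ha); rewrite -ltnS ltn_neqAle sa andbT.
by apply: (X0_dvd hb); rewrite -ltnS ltn_neqAle sb andbT.
Qed.

Lemma bez_form m d a b c : pcoprime a b -> form m a -> form m b -> (m <= d)%N ->
  form (d + m) c -> exists y1 y2, form d y1 /\ form d y2 /\ c = b * y1 - a * y2.
Proof.
move=> hc ha hb hmd hcf.
have [cop [sa|sb]] := coprime_phi hc ha hb.
- have [Y [Z [hY [hZ e]]]] := bez_uni cop sa (size_phi hb) hmd (size_phi hcf).
  have [y [hy py]] := form_exists hY.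
  have [z [hz pz]] := form_exists hZ.
  exists z, (- y); split => //; split; first exact: formN.
  apply: (form_inj hcf).
    apply: formB; first by apply: (form_eq (formM hb hz)); rewrite addnC.
    by apply: (form_eq (formM ha (formN hy))); rewrite addnC.
  by rewrite phiB !phiM phiN py pz e mulrN opprK addrC.
- rewrite coprimep_sym in cop.
  have [Y [Z [hY [hZ e]]]] := bez_uni cop sb (size_phi ha) hmd (size_phi hcf).
  have [y [hy py]] := form_exists hY.
  have [z [hz pz]] := form_exists hZ.
  exists y, (- z); split => //; split; first exact: formN.
  apply: (form_inj hcf).
    apply: formB; first by apply: (form_eq (formM hb hy)); rewrite addnC.
    by apply: (form_eq (formM ha (formN hz))); rewrite addnC.
  by rewrite phiB !phiM phiN py pz e mulrN opprK.
Qed.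


Definition zc (x : R[i]) : 'I_2 -> R[i] := fun i => if i == ord0 then 1 else x.
Local Notation rc := (real_complex R).

Lemma evalC_phi f (x : R[i]) :
  evalC f (zc x) = (map_poly rc (phi f)).[x].
Proof.
elim/mpolyind: f => [|c m p _ _ IH].
  rewrite /evalC phi0 map_poly0 horner0.
  have -> : map_mpoly rc (0 : P) = 0 by apply: raddf0.
  by rewrite meval0.
have eD : forall f g (z : 'I_2 -> R[i]), evalC (f + g) z = evalC f z + evalC g z.
  move=> f g z; rewrite /evalC.
  have -> : map_mpoly rc (f + g) = map_mpoly rc f + map_mpoly rc g by apply: raddfD.
  by rewrite mevalD.
rewrite eD IH phiD.
have -> : map_poly rc (phi (c *: 'X_[m]) + phi p) =
  map_poly rc (phi (c *: 'X_[m])) + map_poly rc (phi p) by apply: raddfD.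
rewrite hornerD; congr (_ + _).
rewrite /evalC map_mpolyZ mevalZ map_mpolyX mevalX phiZ phiX.
rewrite big_ord_recl big_ord1 /zc /= expr1n mul1r.
rewrite -mul_polyC rmorphM /= map_polyC map_polyXn hornerM hornerC hornerXn /=.
by congr (_ * x ^+ (m _)); apply: val_inj.
Qed.


Lemma is_root_zc f (x : R[i]) :
  (map_poly rc (phi f)).[x] = 0 -> is_root f (zc x).
Proof.
move=> h; split; last by rewrite evalC_phi.
by exists ord0; rewrite /zc eqxx oner_neq0.
Qed.

Lemma gcd_big (h s : P) (Q : {poly R}) :
  (forall z, is_root h z -> is_root s z) -> Q %| phi h -> (1 < size Q)%N ->
  (1 < size (gcdp Q (phi s)))%N.
Proof.
move=> hr hQ sQ.
have : size (map_poly rc Q) != 1%N by rewrite size_map_poly; case: (size Q) sQ => [|[|]].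
case/closed_rootP => x hx.
have hxh : root (map_poly rc (phi h)) x.
  by apply: (root_dvdp _ hx); rewrite dvdp_map.
have [_ hs] := hr _ (is_root_zc (eqP hxh)).
rewrite evalC_phi in hs.
have hg : root (map_poly rc (gcdp Q (phi s))) x.
  by rewrite gcdp_map root_gcd hx /root hs eqxx.
rewrite -(size_map_poly rc); apply: (root_size_gt1 _ hg).
rewrite map_poly_eq0 gcdp_eq0 negb_and; apply/orP; left.
by rewrite -size_poly_gt0 (ltn_trans _ sQ).
Qed.


Lemma sos_poly0 (A B : {poly R}) : A ^+ 2 + B ^+ 2 = 0 -> A = 0.
Proof.
move=> hAB.
apply: (@roots_geq_poly_eq0 _ A [seq i%:R | i <- iota 0 (size A)]).
- apply/allP => r /mapP [i _ ->]; rewrite /root.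
  have := congr1 (fun p => p.[i%:R]) hAB; rewrite /= hornerD !horner_exp horner0.
  move/eqP; rewrite paddr_eq0 ?sqr_ge0 // => /andP [].
  by rewrite sqrf_eq0.
- rewrite map_inj_uniq ?iota_uniq // => i j /eqP; rewrite eqr_nat => /eqP.
  done.
- by rewrite size_map size_iota.
Qed.

Lemma h0_false a b : pcoprime a b -> is_form a -> is_form b ->
  (forall z, is_root 0 z -> is_root (a ^+ 2 + b ^+ 2) z) -> False.
Proof.
move=> hc [na ha] [nb hb] hr.
have [ps0|ps0] := eqVneq (phi (a ^+ 2 + b ^+ 2)) 0.
  rewrite phiD !phiXn in ps0.
  have pa0 := sos_poly0 ps0.
  rewrite addrC in ps0; have pb0 := sos_poly0 ps0.
  have a0 : a = 0 by apply: (form_inj ha (form0 na)); rewrite pa0 phi0.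
  have b0 : b = 0 by apply: (form_inj hb (form0 nb)); rewrite pb0 phi0.
  by apply: (not_pcoprime_X0 _ _ hc); rewrite ?a0 ?b0; apply: pdvd0.
have : map_poly rc (phi (a ^+ 2 + b ^+ 2)) != 0 by rewrite map_poly_eq0.
case/closed_nonrootP => x hx.
have h0 : (map_poly rc (phi 0)).[x] = 0 by rewrite phi0 map_poly0 horner0.
have [_ e] := hr _ (is_root_zc h0).
by move: hx; rewrite /root -evalC_phi e eqxx.
Qed.


Section IP.
Variables (n : nat) (ip : P -> P -> R).
Hypothesis Hip : inner_product n ip.

Lemma ip0l (z : P) : form n z -> ip 0 z = 0.
Proof.
move=> hz; case: Hip => lin _.
have := lin 1 0 0 z (form0 n) (form0 n) hz.
rewrite scale1r addr0 mul1r => h; lra.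
Qed.

Lemma ipD x y (z : P) : form n x -> form n y -> form n z -> ip (x + y) z = ip x z + ip y z.
Proof.
by move=> hx hy hz; case: Hip => lin _; rewrite -[x]scale1r lin // scale1r mul1r.
Qed.

Lemma ipZ (c : R) x (z : P) : form n x -> form n z -> ip (c *: x) z = c * ip x z.
Proof.
move=> hx hz; case: Hip => lin _.
have := lin c x 0 z hx (form0 n) hz; rewrite addr0 => ->; by rewrite ip0l // addr0.
Qed.

Lemma ipN x (z : P) : form n x -> form n z -> ip (- x) z = - ip x z.
Proof. by move=> hx hz; rewrite -scaleN1r ipZ // mulN1r. Qed.

Lemma ipB x y (z : P) : form n x -> form n y -> form n z -> ip (x - y) z = ip x z - ip y z.
Proof. by move=> hx hy hz; rewrite ipD ?ipN //; apply: formN. Qed.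

Lemma ipC x y : form n x -> form n y -> ip x y = ip y x.
Proof. by case: Hip => _ [sym _]; apply: sym. Qed.

Lemma ipZZ (c : R) x : form n x -> ip (c *: x) (c *: x) = c * c * ip x x.
Proof.
move=> hx; rewrite (ipZ _ hx (formZ c hx)) (ipC hx (formZ c hx)) (ipZ _ hx hx); ring.
Qed.

Lemma ip_ge0 x : form n x -> 0 <= ip x x.
Proof.
move=> hx; have [->|x0] := eqVneq x 0.
  have h0 : ip 0 0 = 0 by apply: ip0l; apply: dhomog0.
  by rewrite h0.
by case: Hip => _ [_ pos]; apply: ltW; apply: pos.
Qed.

Lemma ip_eq0 x : form n x -> ip x x = 0 -> x = 0.
Proof.
move=> hx h; apply/eqP; apply: contraT => x0.
by case: Hip => _ [_ pos]; have := pos x hx x0; rewrite h ltxx.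
Qed.

Lemma ip_sum (T : eqType) (s : seq T) (F : T -> P) (z : P) :
  (forall t, t \in s -> form n (F t)) -> form n z ->
  ip (\sum_(t <- s) F t) z = \sum_(t <- s) ip (F t) z.
Proof.
move=> hF hz; elim: s hF => [|t s IH] hF; first by rewrite !big_nil ip0l.
have hs : forall t', t' \in s -> form n (F t').
  by move=> t' ht'; apply: hF; rewrite inE ht' orbT.
have ht : form n (F t) by apply: hF; rewrite inE eqxx.
have hS : form n (\sum_(t <- s) F t).
  by rewrite /form big_seq; apply: rpred_sum => t' /hs.
by rewrite !big_cons ipD // IH.
Qed.

End IP.


Lemma lin_quad0 (L C : R) : (forall t : R, 0 <= (t + t) * L + t * t * C) -> L = 0.
Proof.
move=> H; set k := `|C| + 1.
have hC : C <= `|C| := ler_norm C.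
have hC0 : 0 <= `|C| := normr_ge0 C.
have hk : 0 < k by rewrite /k; lra.
set t := - (L / k).
have eL : L = - t * k by rewrite /t opprK divfK // gt_eqF.
have Ht := H t; rewrite eL in Ht.
have e1 : (t + t) * (- t * k) + t * t * C = (t * t) * (C - 2 * k) by ring.
rewrite e1 in Ht.
have neg : C - 2 * k < 0 by rewrite /k; lra.
have ht : t * t <= 0 by nra.
have t0 : t = 0 by nra.
by rewrite eL t0 mulNr mul0r oppr0.
Qed.


Lemma key_hess d m D ip p a b G (r : P) (y : P * P) :
  inner_product (2 * d) ip -> form m a -> form m b -> form D G -> (D + m = d)%N ->
  hess_psd d ip p (a * G, b * G) ->
  form (2 * d) (sigma (a * G, b * G) - p) ->
  form D r -> form2 d y ->
  ip ((a ^+ 2 + b ^+ 2) * r ^+ 2) (sigma (a * G, b * G) - p) = 0 ->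
  ip (r * (b * y.1 - a * y.2)) (sigma (a * G, b * G) - p) = 0.
Proof.
move=> Hip ha hb hG hd Hh hE hr [hy1 hy2] hQ.
set E := sigma (a * G, b * G) - p in hE hQ *.
have hs : form (m + m) (a ^+ 2 + b ^+ 2) by rewrite !expr2; apply: formD; apply: formM.
have hX1 : form (2 * d) ((a ^+ 2 + b ^+ 2) * r ^+ 2).
  by apply: (form_eq (formM hs (formM hr hr))) => /=; rewrite -hd; lia.
have hX2 : form (2 * d) (r * (b * y.1 - a * y.2)).
  apply: (form_eq (formM hr (formB (formM hb hy1) (formM ha hy2)))).
  by rewrite -hd; lia.
have hX3 : form (2 * d) (sigma y).
  by rewrite /sigma !expr2; apply: (form_eq (formD (formM hy1 hy1) (formM hy2 hy2))); lia.
have hAy : form (2 * d) (Aop (a * G, b * G) y).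
  rewrite /Aop /=; apply: (form_eq (formD (formM (formM ha hG) hy1) (formM (formM hb hG) hy2))).
  by rewrite -hd; lia.
apply: (@lin_quad0 _ (ip (sigma y) E + 2 * ip (Aop (a * G, b * G) y) (Aop (a * G, b * G) y))).
move=> t.
pose v := (b * r + t *: y.1, - (a * r) + t *: y.2).
have hv : form2 d v.
  split; rewrite /v /=.
    apply: formD; last exact: formZ.
    by apply: (form_eq (formM hb hr)); rewrite -hd; lia.
  apply: formD; last exact: formZ.
  by apply: formN; apply: (form_eq (formM ha hr)); rewrite -hd; lia.
have e1 : sigma v = (a ^+ 2 + b ^+ 2) * r ^+ 2 + (t + t) *: (r * (b * y.1 - a * y.2))
   + (t * t) *: sigma y.
  by rewrite /sigma /v /= -!mul_mpolyC mpolyCD mpolyCM; ring.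
have e2 : Aop (a * G, b * G) v = t *: Aop (a * G, b * G) y.
  by rewrite /Aop /v /= -!mul_mpolyC; ring.
have := Hh v hv; rewrite e1 e2.
have hZ2 := formZ (t + t) hX2; have hZ3 := formZ (t * t) hX3.
rewrite (ipD Hip (formD hX1 hZ2) hZ3 hE) (ipD Hip hX1 hZ2 hE) (ipZ Hip _ hX2 hE).
rewrite (ipZ Hip _ hX3 hE) (ipZZ Hip _ hAy) hQ.
set L := ip (r * _) E; set S := ip (sigma y) E; set K := ip (Aop _ y) _.
move=> H; lra.
Qed.


Definition good d (ip : P -> P -> R) (E a b r : P) :=
  forall y : P * P, form2 d y -> ip (r * (b * y.1 - a * y.2)) E = 0.

Lemma good_step d m D ip p a b G (r r' c : P) :
  inner_product (2 * d) ip -> pcoprime a b -> form m a -> form m b -> form D G ->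
  (D + m = d)%N ->
  hess_psd d ip p (a * G, b * G) ->
  form (2 * d) (sigma (a * G, b * G) - p) ->
  form D r -> good d ip (sigma (a * G, b * G) - p) a b r' -> form (d + m) c ->
  (a ^+ 2 + b ^+ 2) * r ^+ 2 = r' * c ->
  good d ip (sigma (a * G, b * G) - p) a b r.
Proof.
move=> Hip hc ha hb hG hd Hh hE hr hgood hcf eq y hy.
apply: (key_hess Hip ha hb hG hd Hh hE hr hy).
have hmd : (m <= d)%N by rewrite -hd leq_addl.
have [y1 [y2 [h1 [h2 ec]]]] := bez_form hc ha hb hmd hcf.
by rewrite eq ec; apply: (hgood (y1, y2)).
Qed.


Lemma chain d m ng k ip p a b g h :
  inner_product (2 * d) ip -> pcoprime a b -> form m a -> form m b ->
  form ng g -> form k h -> h != 0 -> (ng + k + m = d)%N ->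
  hess_psd d ip p (a * (g * h), b * (g * h)) ->
  form (2 * d) (sigma (a * (g * h), b * (g * h)) - p) ->
  (forall z, is_root h z -> is_root (a ^+ 2 + b ^+ 2) z) ->
  forall n (Q : {poly R}) (r : P), (size Q <= n)%N -> Q %| phi h -> form k r ->
  phi r = Q ->
  good d ip (sigma (a * (g * h), b * (g * h)) - p) a b (g * r) ->
  good d ip (sigma (a * (g * h), b * (g * h)) - p) a b (g * 'X_0 ^+ k).
Proof.
move=> Hip hc ha hb hg hh h0 hd Hh hE hroot.
set E := sigma _ - p.
have hG : form (ng + k) (g * h) := formM hg hh.
have hD : (ng + k + m = d)%N := hd.
have ph0 : phi h != 0.
  apply/eqP => e; move/eqP: h0; apply.
  by apply: (form_inj hh (form0 k)); rewrite e phi0.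
have hsh := size_phi hh.
set s := a ^+ 2 + b ^+ 2.
have hs : form (m + m) s by rewrite /s !expr2; apply: formD; apply: formM.
have hsS := size_phi hs.
elim=> [|n IH] Q r hQ hQh hr pr hgood.
  exfalso; move: hQ; rewrite leqn0 size_poly_eq0 => /eqP Q0.
  by move: hQh; rewrite Q0 dvd0p (negbTE ph0).
have Q0 : Q != 0 by apply/eqP => Q0; move: hQh; rewrite Q0 dvd0p (negbTE ph0).
have [sQ1|sQ1] := leqP (size Q) 1.
  set c := Q`_0.
  have eQ : Q = c%:P := size1_polyC sQ1.
  have c0 : c != 0 by apply/eqP => c0; move/eqP: Q0; apply; rewrite eQ c0.
  have er : r = c *: 'X_0 ^+ k.
    apply: (form_inj hr (formZ c (formXn k))).
    by rewrite pr phiZ phiXn phiX0 expr1n eQ alg_polyC.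
  move=> y [hy1 hy2].
  have := hgood (c^-1 *: y.1, c^-1 *: y.2) (conj (formZ _ hy1) (formZ _ hy2)).
  rewrite er /=.
  have hcc : c%:MP * (c^-1)%:MP = 1 :> P by rewrite -mpolyCM mulfV // mpolyC1.
  have -> : g * (c *: 'X_0 ^+ k) * (b * (c^-1 *: y.1) - a * (c^-1 *: y.2)) =
     (c%:MP * (c^-1)%:MP) * (g * 'X_0 ^+ k * (b * y.1 - a * y.2)).
    by rewrite -!mul_mpolyC; ring.
  by rewrite hcc mul1r.
set Gd := gcdp Q (phi s).
have hG1 : (1 < size Gd)%N := gcd_big hroot hQh sQ1.
have Gd0 : Gd != 0 by rewrite -size_poly_gt0 (ltn_trans _ hG1).
have hGQ : Gd %| Q := dvdp_gcdl _ _.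
have hGs : Gd %| phi s := dvdp_gcdr _ _.
have hQh' : Q %/ Gd %| phi h := dvdp_trans (divp_dvd hGQ) hQh.
have sQk : (size Q <= k.+1)%N := leq_trans (dvdp_leq ph0 hQh) hsh.
case/dvdpP: hGQ => Q' eQ.
case/dvdpP: hGs => PS eS.
have Q'0 : Q' != 0 by apply/eqP => e; move/eqP: Q0; apply; rewrite eQ e mul0r.
have hsQ : size Q = (size Q' + size Gd).-1 by rewrite eQ size_mul.
have sPS : (size PS <= (m + m).+1)%N.
  have [->|PS0] := eqVneq PS 0; first by rewrite size_poly0.
  have hsS' : size (phi s) = (size PS + size Gd).-1 by rewrite eS size_mul.
  move: hsS hsS' hG1; rewrite -!subn1; move: (size PS) (size Gd) (size (phi s)) => x y z.
  clear; lia.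
have hQ'p : (0 < size Q')%N by rewrite size_poly_gt0.
have sQ' : (size Q' <= n)%N.
  move: hQ hsQ hG1 hQ'p; rewrite -!subn1; move: (size Q) (size Q') (size Gd) => x y z.
  clear; lia.
have sQ'k : (size Q' <= k.+1)%N.
  move: sQk hsQ hG1 hQ'p; rewrite -!subn1; move: (size Q) (size Q') (size Gd) => x y z.
  clear; lia.
have [r' [hr' pr']] := @form_exists k Q' sQ'k.
have hQ'h : Q' %| phi h.
  by apply: (dvdp_trans _ hQh); rewrite eQ dvdp_mulr // dvdpp.
set C0 := PS * Q'.
have sC0 : (size C0 <= (m + m + k).+1)%N.
  have := size_polyMleq PS Q'; rewrite -/C0.
  move: sPS sQ'k hQ'p; rewrite -!subn1; move: (size PS) (size Q') (size C0) => x y z.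
  clear; lia.
have [cc [hcc pcc]] := @form_exists (m + m + k) C0 sC0.
have e0 : s * r' ^+ 2 = r * cc.
  apply: (form_inj (formM hs (formM hr' hr'))).
    by apply: (form_eq (formM hr hcc)); lia.
  by rewrite !phiM ?phiXn pr' pr pcc eS eQ /C0; ring.
apply: (IH Q' r') => //.
apply: (@good_step d m (ng + k) ip p a b (g * h) (g * r') (g * r) (g * cc)) => //.
- exact: formM.
- by apply: (form_eq (formM hg hcc)); lia.
transitivity (g ^+ 2 * (s * r' ^+ 2)); first by rewrite /s; ring.
by rewrite e0; ring.
Qed.


Lemma sigma_form d (y : P * P) : form2 d y -> form (2 * d) (sigma y).
Proof.
case=> h1 h2; rewrite /sigma !expr2.
by apply: (form_eq (formD (formM h1 h1) (formM h2 h2))); lia.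
Qed.

Lemma Aop_form d (u y : P * P) : form2 d u -> form2 d y -> form (2 * d) (Aop u y).
Proof.
case=> h1 h2 [k1 k2]; rewrite /Aop.
by apply: (form_eq (formD (formM h1 k1) (formM h2 k2))); lia.
Qed.

Lemma final_step d ip p (u wv : P * P) (a b W : P) (s : seq (R * (P * P))) :
  inner_product (2 * d) ip -> form2 d u -> grad_zero d ip p u -> hess_psd d ip p u ->
  form (2 * d) p ->
  good d ip (sigma u - p) a b W -> form2 d wv -> form (2 * d) (Aop (a * W, b * W) wv) ->
  (forall t : R * (P * P), t \in s -> 0 <= t.1 /\ form2 d t.2 /\ Aop u t.2 = 0) ->
  p = Aop (a * W, b * W) wv + \sum_(t <- s) t.1 *: sigma t.2 ->
  fp ip p u = 0.
Proof.
move=> Hip hu Hg Hh hp hgood hwv hAw hs ep.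
rewrite /fp; set E := sigma u - p.
have hsu := sigma_form hu.
have hE : form (2 * d) E by apply: formB.
have hS : form (2 * d) (\sum_(t <- s) t.1 *: sigma t.2).
  rewrite /form big_seq; apply: rpred_sum => t /hs [_ [hc _]].
  by apply: formZ; apply: sigma_form.
have eE : E = sigma u - (Aop (a * W, b * W) wv + \sum_(t <- s) t.1 *: sigma t.2).
  by rewrite /E -ep.
have h1 : ip (sigma u) E = 0.
  have -> : sigma u = Aop u u by rewrite /sigma /Aop !expr2.
  exact: Hg.
have h2 : ip (Aop (a * W, b * W) wv) E = 0.
  have -> : Aop (a * W, b * W) wv = W * (b * wv.2 - a * (- wv.1)) by rewrite /Aop /=; ring.
  by apply: (hgood (wv.2, - wv.1)); case: hwv => ? ?; split => //; apply: formN.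
have h3 : 0 <= ip (\sum_(t <- s) t.1 *: sigma t.2) E.
  rewrite (ip_sum Hip) //; last first.
    by move=> t /hs [_ [hc _]]; apply: formZ; apply: sigma_form.
  rewrite big_seq; apply: sumr_ge0 => t /hs [c1 [hc hA]].
  rewrite (ipZ Hip _ (sigma_form hc) hE); apply: mulr_ge0 => //.
  have := Hh _ hc; rewrite hA (ip0l Hip (form0 _)) mulr0 addr0 //.
have hge := ip_ge0 Hip hE.
have key : ip E E = - ip (\sum_(t <- s) t.1 *: sigma t.2) E.
  transitivity (ip (sigma u - (Aop (a * W, b * W) wv + \sum_(t <- s) t.1 *: sigma t.2)) E).
    by rewrite -eE.
  rewrite (ipB Hip hsu (formD hAw hS) hE) (ipD Hip hAw hS hE) h1 h2; ring.
lra.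
Qed.


Lemma sos_form d (p : P) : sos d p -> form (2 * d) p.
Proof.
case=> s [hs ->]; rewrite /form big_seq; apply: rpred_sum => q /hs hq.
by rewrite expr2; apply: (form_eq (formM hq hq)); lia.
Qed.

Lemma form_prod_deg i j d a G : form i a -> form j G -> G != 0 -> a != 0 ->
  form d (a * G) -> (i + j = d)%N.
Proof.
move=> ha hG G0 a0 hd; apply: (form_uniq (formM ha hG) hd).
by rewrite mulf_neq0.
Qed.

End Phi.

Theorem proposition4p4 (R : realType) (d : nat) (ip : {mpoly R[2]} -> {mpoly R[2]} -> R)
    (u1 u2 p g h u1' u2' : {mpoly R[2]}) :
  inner_product (2 * d) ip ->
  form2 d (u1, u2) ->
  sos d p ->
  grad_zero d ip p (u1, u2) ->
  hess_psd d ip p (u1, u2) ->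
  is_form g -> is_form h -> is_form u1' -> is_form u2' ->
  u1 = u1' * g * h ->
  u2 = u2' * g * h ->
  is_gcd u1 u2 (g * h) ->
  pcoprime u1' u2' ->
  pcoprime (u1' ^+ 2 + u2' ^+ 2) g ->
  (forall z : 'I_2 -> R[i], is_root h z -> is_root (u1' ^+ 2 + u2' ^+ 2) z) ->
  let k := deg_form h in
  let w := (u1' * g * 'X_0 ^+ k, u2' * g * 'X_0 ^+ k) in
  in_im_plus_cone d w (u1, u2) p ->
  fp ip p (u1, u2) = 0.
Proof.
move=> Hip Hu Hp Hg Hh fg fh fa fb e1 e2 _ hco _ hroot k w Hin.
subst u1 u2.
have eu : (u1' * g * h, u2' * g * h) = (u1' * (g * h), u2' * (g * h)) by rewrite !mulrA.
rewrite eu in Hu Hg Hh Hin *.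
have ew : w = (u1' * (g * 'X_0 ^+ k), u2' * (g * 'X_0 ^+ k)) by rewrite /w !mulrA.
rewrite ew in Hin.
case: Hin => v [s [hv [hs ep]]].
have hp := sos_form Hp.
have hE : Defs.form (2 * d) (sigma (u1' * (g * h), u2' * (g * h)) - p).
  by apply: formB => //; apply: sigma_form.
have [g0|g0] := eqVneq g 0.
  subst g.
  apply: (final_step Hip Hu Hg Hh hp _ hv _ hs ep).
    move=> y _.
    have -> : 0 * 'X_0 ^+ k * (u2' * y.1 - u1' * y.2) = 0 by rewrite !mul0r.
    exact: (ip0l Hip hE).
  by rewrite /Aop !mul0r !mulr0 !mul0r addr0; apply: form0.
have [h0|h0] := eqVneq h 0.
  by exfalso; rewrite h0 in hroot; apply: (h0_false hco fa fb hroot).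
case: fg => ng hg; case: fh => kh hh.
have ek : kh = k by rewrite /k /deg_form (form_msize hh h0).
rewrite ek in hh.
have gh0 : g * h != 0 by rewrite mulf_neq0.
have hgh : Defs.form (ng + k) (g * h) := formM hg hh.
case: Hu => hu1 hu2.
have [m [ha [hb hd]]] : exists m, Defs.form m u1' /\ Defs.form m u2' /\ (ng + k + m = d)%N.
  case: fa => ma ha; case: fb => mb hb.
  have [a0|a0] := eqVneq u1' 0.
    have [b0|b0] := eqVneq u2' 0.
      by exfalso; apply: (not_pcoprime_X0 _ _ hco); rewrite ?a0 ?b0; apply: pdvd0.
    exists mb; split; first by rewrite a0; apply: form0.
    split => //; rewrite addnC; exact: (form_prod_deg hb hgh gh0 b0 hu2).
  exists ma; split => //; split; last by rewrite addnC; exact: (form_prod_deg ha hgh gh0 a0 hu1).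
  have [b0|b0] := eqVneq u2' 0; first by rewrite b0; apply: form0.
  have e1 := form_prod_deg ha hgh gh0 a0 hu1.
  have e2 := form_prod_deg hb hgh gh0 b0 hu2.
  have -> : ma = mb by lia.
  exact: hb.
have hX : Defs.form (ng + k) (g * 'X_0 ^+ k) := formM hg (formXn _ k).
apply: (final_step Hip (conj hu1 hu2) Hg Hh hp _ hv _ hs ep); last first.
  apply: Aop_form => //.
  by split; [apply: (form_eq (formM ha hX)) | apply: (form_eq (formM hb hX))]; lia.
have hgood : good d ip (sigma (u1' * (g * h), u2' * (g * h)) - p) u1' u2' (g * h).
  move=> y [hy1 hy2].
  have -> : g * h * (u2' * y.1 - u1' * y.2) = Aop (u1' * (g * h), u2' * (g * h)) (- y.2, y.1).
    by rewrite /Aop /=; ring.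
  by apply: Hg; split => //; apply: formN.
exact: (chain Hip hco ha hb hg hh h0 hd Hh hE hroot (leqnn _) (dvdpp _) hh (erefl _) hgood).
Qed.
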